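(* Let $d\ge1$, $p>1$, let $\{1,\dots,d\}$ be partitioned into $\mathcal{D}$ (desirable) and $\mathcal{U}$ (undesirable), let $c\in\mathbb{R}^d$ with $c_f>0$, let $\mathbb{C}\in\mathbb{R}^{d\times d}$ be the contribution matrix of a causal graph and $h_0\in\mathbb{R}^d$ with $\mathbb{C}h_0\ge0$ componentwise, let $\alpha\in\mathbb{R}$ and $\beta\in(0,1)$. Consider the agent's problem $$\min_{e\in\mathbb{R}^d,\ e\ge0}\ \Big(\sum_{f} c_f e_f^{\,p}\Big)^{1/p}\quad\text{s.t.}\quad(\mathbb{C}h_0)^\top e\ge\alpha .$$ If $$\Big[\sum_{f\in\mathcal{D}}\Big(\frac{(\mathbb{C}h_0)_f}{c_f}\Big)^{2/(p-1)}\Big]^{1/2}\ \ge\ \frac{\beta}{\sqrt{1-\beta^2}}\Big[\sum_{f\in\mathcal{U}}\Big(\frac{(\mathbb{C}h_0)_f}{c_f}\Big)^{2/(p-1)}\Big]^{1/2},$$ then every optimal solution (best response) of this problem is a $\beta$-desirable effort profile.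
   Context: A causal graph is a weighted directed acyclic graph on $\{1,\dots,d\}$ with adjacency matrix $A$ ($A_{ij}$ the weight of edge $i\to j$, $0$ if absent); its contribution matrix is $\mathbb{C}=\sum_{k=0}^{d}A^k$. An effort profile $e$ is $\beta$-desirable if $\|e_{\mathcal{D}}\|_2\ge\beta\|e\|_2$, where $e_{\mathcal{D}}$ is the restriction of $e$ to the coordinates in $\mathcal{D}$. *)

(* Defs.v *)
From HB Require Import structures.
From mathcomp Require Import all_boot all_order all_algebra.
From mathcomp Require Import reals exp.
Set Implicit Arguments. Unset Strict Implicit. Unset Printing Implicit Defensive.
Import Order.TTheory GRing.Theory Num.Theory.
Local Open Scope ring_scope.

Section Defs.
Variable R : realType.

Definition edge (d : nat) (A : 'M[R]_d) : rel 'I_d := fun i j => A i j != 0.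

Definition acyclic (d : nat) (A : 'M[R]_d) : Prop :=
  forall (x : 'I_d) (s : seq 'I_d), path (edge A) x s -> last x s = x -> s = [::].

Definition contribution (d : nat) (A : 'M[R]_d) : 'M[R]_d :=
  \sum_(k < d.+1) A ^+ k.

Definition norm2 (d : nat) (e : 'I_d -> R) : R := Num.sqrt (\sum_(f < d) e f ^+ 2).
Definition norm2_on (d : nat) (D : {set 'I_d}) (e : 'I_d -> R) : R :=
  Num.sqrt (\sum_(f in D) e f ^+ 2).

Definition beta_desirable (d : nat) (D : {set 'I_d}) (beta : R) (e : 'I_d -> R) : Prop :=
  norm2_on D e >= beta * norm2 e.

Definition cost (d : nat) (c : 'I_d -> R) (p : R) (e : 'I_d -> R) : R :=
  powR (\sum_(f < d) c f * powR (e f) p) (1 / p).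

Definition feasible (d : nat) (v : 'I_d -> R) (alpha : R) (e : 'I_d -> R) : Prop :=
  (forall f, 0 <= e f) /\ \sum_(f < d) v f * e f >= alpha.

Definition best_response (d : nat) (c v : 'I_d -> R) (p alpha : R) (e : 'I_d -> R) : Prop :=
  feasible v alpha e /\
  forall e' : 'I_d -> R, feasible v alpha e' -> cost c p e <= cost c p e'.

End Defs.

(* Main.v *)
Require Import Defs.
From HB Require Import structures.
From mathcomp Require Import all_boot all_order all_algebra.
From mathcomp Require Import reals exp sequences.
From mathcomp Require Import ring lra.
Import Order.TTheory GRing.Theory Num.Theory.
Local Open Scope ring_scope.

Lemma bern (R : realType) (p t : R) : 1 < p -> 0 < t -> t != 1 ->
  1 + p * (t - 1) < powR t p.
Proof.
move=> hp ht ht1.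
have u0 : ln t != 0 by rewrite ln_eq0.
set u := ln t.
have tE : t = expR u by rewrite /u lnK.
have hF := expR_ge1Dx ((p - 1) * u).
have hG : 1 + (- u) < expR (- u) by apply: expR_gt1Dx; rewrite oppr_eq0.
have EG : expR u * expR (- u) = 1 by rewrite -expRD subrr expR0.
have E0 : 0 < expR u := expR_gt0 u.
have pE : powR t p = expR u * expR ((p - 1) * u).
  by rewrite /powR gt_eqF // -expRD -/u; congr expR; ring.
rewrite pE -tE.
have h1 : expR u * (1 + (p - 1) * u) <= expR u * expR ((p - 1) * u) by rewrite ler_pM2l.
have h2 : expR u * (1 - u) < expR u * expR (- u) by rewrite ltr_pM2l.
rewrite EG in h2. rewrite -tE in h1 h2 E0.
have h3 : (p - 1) * (t * (1 - u)) < (p - 1) * 1 by rewrite ltr_pM2l ?subr_gt0.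
nra.
Qed.
Lemma tangent (R : realType) (p x y : R) : 1 < p -> 0 <= x -> 0 <= y -> x != y ->
  0 < powR x p - powR y p - p * powR y (p - 1) * (x - y).
Proof.
move=> hp hx hy hxy.
have p0 : p != 0 by rewrite gt_eqF // (lt_trans ltr01).
have p10 : p - 1 != 0 by rewrite subr_eq0 gt_eqF.
have [y0|ypos] := eqVneq y 0.
  rewrite y0 !powR0 // mulr0 mul0r !subr0; rewrite lt0r powR_ge0 andbT powR_eq0.
  by rewrite p0 andbT; move: hxy; rewrite y0.
have yp : 0 < y by rewrite lt0r ypos.
have [x0|xpos] := eqVneq x 0.
  have hyy : y * powR y (p - 1) = powR y p by rewrite mulr_powRB1 // (lt_trans ltr01).
  rewrite x0 powR0 //.
  have -> : p * powR y (p - 1) * (0 - y) = - p * (y * powR y (p - 1)) by ring.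
  rewrite hyy.
  have : 0 < powR y p by rewrite powR_gt0.
  nra.
have xp : 0 < x by rewrite lt0r xpos.
set t := x / y.
have tp : 0 < t by rewrite divr_gt0.
have t1 : t != 1 by rewrite /t; apply: contra hxy => /eqP h; apply/eqP; rewrite -[x](divfK ypos) h mul1r.
have xE : x = t * y by rewrite /t divfK.
have := @bern R p t hp tp t1.
have Yp : 0 < powR y p by rewrite powR_gt0.
have hxp : powR x p = powR t p * powR y p by rewrite xE powRM ?ltW.
have hyy : y * powR y (p - 1) = powR y p by rewrite mulr_powRB1 // (lt_trans ltr01).
rewrite hxp.
have -> : p * powR y (p - 1) * (x - y) = p * (t - 1) * (y * powR y (p - 1)).
  by rewrite xE; ring.
rewrite hyy => h.
have : 0 < (powR t p - 1 - p * (t - 1)) * powR y p by apply: mulr_gt0; lra.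
lra.
Qed.
Lemma main (R : realType) (d : nat)
    (D : {set 'I_d}) (p : R) (hp : 1 < p)
    (c : 'I_d -> R) (hc : forall f, 0 < c f) (v : 'I_d -> R)
    (hv : forall f, 0 <= v f)
    (alpha beta : R) (hb0 : 0 < beta) (hb1 : beta < 1)
    (hcond : Num.sqrt (\sum_(f in D) powR (v f / c f) (2 / (p - 1)))
             >= beta / Num.sqrt (1 - beta ^+ 2) *
                Num.sqrt (\sum_(f in ~: D) powR (v f / c f) (2 / (p - 1))))
    (e : 'I_d -> R) :
    best_response c v p alpha e -> beta_desirable D beta e.
Proof.
move=> [[he0 hfe] hopt].
have p0 : 0 < p by rewrite (lt_trans ltr01).
have p1 : 0 < p - 1 by rewrite subr_gt0.
pose r f := v f / c f.
have r0 f : 0 <= r f by rewrite divr_ge0 // ltW.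
pose w f := powR (r f) (p - 1)^-1.
have w0 f : 0 <= w f by apply: powR_ge0.
pose S := \sum_f v f * w f.
have S0 : 0 <= S by apply: sumr_ge0 => f _; rewrite mulr_ge0.
have hS : 0 < alpha -> S != 0.
  move=> ha; apply/negP => /eqP HS.
  have H := psumr_eq0P (fun f _ => mulr_ge0 (hv f) (w0 f)) HS.
  have vz f : v f = 0.
    have /eqP := H f isT; rewrite mulf_eq0 => /orP[/eqP //|/eqP /powR_eq0_eq0 /eqP].
    by rewrite /r mulf_eq0 invr_eq0 (gt_eqF (hc f)) orbF => /eqP.
  move: hfe; rewrite big1 => [|f _]; last by rewrite vz mul0r.
  by rewrite leNgt ha.
pose k := if 0 < alpha then alpha / S else 0.
have k0 : 0 <= k by rewrite /k; case: ifP => // ha; rewrite divr_ge0 // ltW.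
pose y f := k * w f.
have y0 f : 0 <= y f by rewrite mulr_ge0.
pose K := powR k (p - 1).
have key f : c f * powR (y f) (p - 1) = K * v f.
  rewrite /y powRM // -powRrM mulVf ?gt_eqF // powRr1 // /r.
  by rewrite mulrCA [c f * _]mulrC divfK ?gt_eqF.
have vy : \sum_f v f * y f = k * S.
  rewrite /S mulr_sumr; apply: eq_bigr => f _; rewrite /y; ring.
have hvy : \sum_f v f * y f <= \sum_f v f * e f.
  rewrite vy /k; case: ifP => ha.
    by rewrite mulfVK ?hS.
  by rewrite mul0r sumr_ge0 // => f _; rewrite mulr_ge0.
have yfeas : feasible v alpha y.
  split => //; rewrite vy /k; case: ifP => ha.
    by rewrite mulfVK ?hS.
  by rewrite mul0r leNgt ha.
have hc1 := hopt y yfeas.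
have hsum : \sum_f c f * powR (e f) p <= \sum_f c f * powR (y f) p.
  rewrite leNgt; apply/negP => hlt.
  move: hc1; rewrite leNgt => /negP; apply.
  rewrite /cost; apply: gt0_ltr_powR => //.
  - by rewrite divr_gt0.
  - by rewrite nnegrE sumr_ge0 // => f _; rewrite mulr_ge0 ?powR_ge0 // ltW.
  - by rewrite nnegrE sumr_ge0 // => f _; rewrite mulr_ge0 ?powR_ge0 // ltW.
pose phi f := powR (e f) p - powR (y f) p - p * powR (y f) (p - 1) * (e f - y f).
have phi0 f : 0 <= c f * phi f.
  apply: mulr_ge0; first exact: ltW.
  rewrite /phi; have [->|ne] := eqVneq (e f) (y f); first by rewrite !subrr mulr0 subrr.
  exact/ltW/(@tangent R).
have sphi : \sum_f c f * phi f = \sum_f c f * powR (e f) p - \sum_f c f * powR (y f) p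
     - p * K * (\sum_f v f * e f - \sum_f v f * y f).
  rewrite -!sumrB mulr_sumr -sumrB; apply: eq_bigr => f _.
  have := key f; move=> kf; rewrite /phi.
  transitivity (c f * powR (e f) p - c f * powR (y f) p - p * (c f * powR (y f) (p - 1)) * (e f - y f)); first by ring.
  rewrite kf; ring.
have sphi0 : \sum_f c f * phi f = 0.
  apply/eqP; rewrite eq_le sumr_ge0 // andbT sphi.
  have : 0 <= p * K * (\sum_f v f * e f - \sum_f v f * y f).
    by rewrite mulr_ge0 ?subr_ge0 // mulr_ge0 ?powR_ge0 // ltW.
  lra.
have ey f : e f = y f.
  have H : c f * phi f = 0 := psumr_eq0P (fun f _ => phi0 f) sphi0 (i:=f) isT.
  apply/eqP; apply: contraT => ne.
  have := @tangent R p _ _ hp (he0 f) (y0 f) ne.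
  move/eqP: H; rewrite mulf_eq0 gt_eqF //= /phi => /eqP ->.
  by rewrite ltxx.
pose P f := powR (r f) (2 / (p - 1)).
have P0 f : 0 <= P f by apply: powR_ge0.
have e2 f : e f ^+ 2 = k ^+ 2 * P f.
  rewrite ey /y exprMn; congr (_ * _).
  by rewrite -powR_mulrn // -powRrM mulrC.
set SD := \sum_(f in D) P f.
set SU := \sum_(f in ~: D) P f.
have SD0 : 0 <= SD by apply: sumr_ge0.
have SU0 : 0 <= SU by apply: sumr_ge0.
have hD : \sum_(f in D) e f ^+ 2 = k ^+ 2 * SD.
  by rewrite mulr_sumr; apply: eq_bigr => f _; rewrite e2.
have hT : \sum_f e f ^+ 2 = k ^+ 2 * (SD + SU).
  rewrite (bigID (fun f => f \in D)) /= mulrDr hD /SU mulr_sumr; congr (_ + _).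
  rewrite mulr_sumr [RHS](eq_bigl (fun f => f \notin D)); last by move=> f; rewrite in_setC.
  by apply: eq_bigr => f _; rewrite e2.
rewrite /beta_desirable /norm2_on /norm2 hD hT.
move: hcond; rewrite -/SD -/SU => hcond.
have bb : 0 < 1 - beta ^+ 2.
  rewrite subr_gt0 expr2; apply: (le_lt_trans (y := beta * 1)).
    by rewrite ler_pM2l // ltW.
  by rewrite mulr1.
set s := Num.sqrt (1 - beta ^+ 2) in hcond.
have s0 : 0 < s by rewrite sqrtr_gt0.
have s2 : s ^+ 2 = 1 - beta ^+ 2 by rewrite sqr_sqrtr // ltW.
set a := Num.sqrt SD in hcond.
set b := Num.sqrt SU in hcond.
have a2 : a ^+ 2 = SD by rewrite sqr_sqrtr.
have b2 : b ^+ 2 = SU by rewrite sqr_sqrtr.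
have a0 : 0 <= a by apply: sqrtr_ge0.
have b0 : 0 <= b by apply: sqrtr_ge0.
have h1 : beta * b <= a * s.
  by move: hcond; rewrite mulrAC ler_pdivrMr.
have h2 : (beta * b) ^+ 2 <= (a * s) ^+ 2.
  have bb0 : 0 <= beta * b by apply: mulr_ge0 => //; apply: ltW.
  by rewrite !expr2; apply: ler_pM.
have h3 : beta ^+ 2 * (SD + SU) <= SD.
  move: h2; rewrite !exprMn a2 b2 s2 => h2; nra.
have -> : beta * Num.sqrt (k ^+ 2 * (SD + SU)) = Num.sqrt (beta ^+ 2 * (k ^+ 2 * (SD + SU))).
  rewrite [RHS]sqrtrM; last exact: sqr_ge0.
  by rewrite sqrtr_sqr gtr0_norm.
apply: ler_wsqrtr.
rewrite mulrCA; apply: ler_wpM2l; first exact: sqr_ge0.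
exact: h3.
Qed.

Theorem theorem2 (R : realType) (d : nat) (hd : (0 < d)%N)
    (D : {set 'I_d}) (p : R) (hp : 1 < p)
    (c : 'I_d -> R) (hc : forall f, 0 < c f)
    (A : 'M[R]_d) (hA : acyclic A)
    (h0 : 'cV[R]_d)
    (hCh0 : forall f, 0 <= (contribution A *m h0) f 0)
    (alpha beta : R) (hb0 : 0 < beta) (hb1 : beta < 1)
    (hcond : Num.sqrt (\sum_(f in D)
                 powR ((contribution A *m h0) f 0 / c f) (2 / (p - 1)))
             >= beta / Num.sqrt (1 - beta ^+ 2) *
                Num.sqrt (\sum_(f in ~: D)
                 powR ((contribution A *m h0) f 0 / c f) (2 / (p - 1)))) :
  forall e : 'I_d -> R,
    best_response c (fun f => (contribution A *m h0) f 0) p alpha e ->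
    beta_desirable D beta e.
Proof.
move=> e.
exact: (@main R d D p hp c hc (fun f => (contribution A *m h0) f 0) hCh0 alpha beta hb0 hb1 hcond e).
Qed.
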